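(* Let $X,Y$ be Polish spaces, $f\colon X\to Y$ a continuous map, and let $A\subseteq X$ be the set of points of $X$ which are not locally dense for $f$. Then $f(A)$ is meager in $Y$.
   Context: For a continuous map $f\colon X\to Y$ between Polish spaces, a point $x\in X$ is locally dense for $f$ if for every neighborhood $U$ of $x$ the set $\overline{f(U)}$ is a neighborhood of $f(x)$. *)

(* Defs.v *)
From HB Require Import structures.
From mathcomp Require Import all_boot all_order all_algebra.
From mathcomp Require Import all_classical all_reals all_analysis.
From mathcomp Require Import Rstruct Rstruct_topology.
Set Implicit Arguments. Unset Strict Implicit. Unset Printing Implicit Defensive.
Import Order.TTheory GRing.Theory Num.Theory.
Local Open Scope classical_set_scope.
Local Open Scope ring_scope.

Definition compatible_metric (T : topologicalType) (d : T -> T -> Rdefinitions.R) :=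
  [/\ (forall x y, 0 <= d x y),
      (forall x y, d x y = 0 <-> x = y),
      (forall x y, d x y = d y x),
      (forall x y z, d x z <= d x y + d y z) &
      (forall A : set T, open A <->
         (forall x, A x -> exists2 e : Rdefinitions.R, 0 < e &
                              [set y | d x y < e] `<=` A))].

Definition completely_metrizable (T : topologicalType) :=
  exists d : T -> T -> Rdefinitions.R, compatible_metric d /\
    (forall u : nat -> T,
       (forall e : Rdefinitions.R, 0 < e ->
          exists N : nat, forall m n : nat, (N <= m)%N -> (N <= n)%N ->
            d (u m) (u n) < e) ->
       exists l : T, u @ \oo --> l).

Definition separable_space (T : topologicalType) :=
  exists D : set T, countable D /\ dense D.

Definition polish (T : topologicalType) :=
  separable_space T /\ completely_metrizable T.

Definition nowhere_dense (T : topologicalType) (A : set T) :=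
  (closure A)° = set0.

Definition meager (T : topologicalType) (B : set T) :=
  exists F : nat -> set T, (forall n, nowhere_dense (F n)) /\
    B `<=` \bigcup_n F n.

Definition locally_dense (X Y : topologicalType) (f : X -> Y) (x : X) :=
  forall U : set X, nbhs x U -> nbhs (f x) (closure (f @` U)).

(* Main.v *)
Require Import Defs.
From mathcomp Require Import all_boot all_order all_algebra.
From mathcomp Require Import all_classical all_reals all_analysis.
From mathcomp Require Import Rstruct Rstruct_topology lra.
Import Order.TTheory GRing.Theory Num.Theory.
Local Open Scope classical_set_scope.

Lemma nd_boundary (T : topologicalType) (S : set T) :
  nowhere_dense (closure S `\` (closure S)°).
Proof.
rewrite /nowhere_dense; set C := closure S; set E := C `\` C°.
have cC : closed C by exact: closed_closure.
have c2 : closed (~` C°) by rewrite closedC; exact: open_interior.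
have h1 : closure E `<=` C.
  by rewrite [X in _ `<=` X](closure_id _).1 //; apply: closureS => x [].
have h2 : closure E `<=` ~` C°.
  by rewrite [X in _ `<=` X](closure_id _).1 //; apply: closureS => x [].
apply/seteqP; split => // x Hx.
have := interiorS h1 Hx; have := h2 _ (interior_subset Hx); by [].
Qed.

Lemma small_radius (e : Rdefinitions.R) : (0 < e)%R ->
  exists k : nat, (2 * (k.+1%:R)^-1 < e)%R.
Proof.
move=> e0; have h0 : (0 <= 2 / e)%R by rewrite divr_ge0 // ltW.
have := archi_boundP h0; set k := Num.Def.archi_bound _ => hk.
exists k.
have kpos : (0 < (k.+1%:R : Rdefinitions.R))%R by rewrite ltr0n.
have hk1 : (2 / e < k.+1%:R)%R.
  by apply: (lt_trans hk); rewrite ltr_nat.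
rewrite ltr_pdivrMr // in hk1.
by rewrite ltr_pdivrMr // mulrC.
Qed.

Theorem mainTheorem6 (X Y : topologicalType) (f : X -> Y) :
  polish X -> polish Y -> continuous f ->
  meager (f @` [set x | ~ locally_dense f x]).
Proof.
move=> [[D [cD dD]] [d [[d0 d00 dsym dtri dopen] _]]] _ _.
have /countable_injP[g ginj] := cD.
pose r (k : nat) : Rdefinitions.R := (k.+1%:R)^-1%R.
have r0 k : (0 < r k)%R by rewrite invr_gt0 ltr0n.
pose ball z e := [set y | (d z y < e)%R].
have ballO z e : open (ball z e).
  apply/dopen => y /= hy; exists (e - d z y)%R; first by rewrite subr_gt0.
  move=> w /= hw; have := dtri z y w; rewrite /ball /=; lra.
pose Bmk (m k : nat) := [set y | exists2 q, D q /\ g q = m & ball q (r k) y].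
pose B n := if @unpickle (prod nat nat) n is Some (m, k) then Bmk m k else set0.
exists (fun n => closure (f @` B n) `\` (closure (f @` B n))°); split.
  by move=> n; exact: nd_boundary.
move=> _ [x /= nld <-].
have [U nU nfU] : exists2 U, nbhs x U & ~ nbhs (f x) (closure (f @` U)).
  apply: contra_notP nld => H U nU; apply: contrapT => hn; apply: H.
  by exists U.
rewrite nbhsE /= in nU; case: nU => V [oV Vx] VU.
have [e e0 eV] := (dopen V).1 oV x Vx.
have [k hk] := small_radius _ e0.
have [q [Oq Dq]] : exists q, ball x (r k) q /\ D q.
  have bx : ball x (r k) x by rewrite /ball /= (d00 x x).2.
  have [q [h1 h2]] := dD (ball x (r k)) (ex_intro _ x bx) (ballO _ _).
  by exists q.
exists (pickle (g q, k)) => //.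
have BE : B (pickle (g q, k)) = Bmk (g q) k by rewrite /B pickleK.
rewrite BE.
have BU : Bmk (g q) k `<=` U.
  move=> y [q' [Dq' gq'] hy]; have qq : q' = q by apply: ginj; rewrite ?inE.
  subst q'; apply/VU/eV; rewrite /=.
  have hk2 : (2 * r k < e)%R := hk.
  have := dtri x q y; move: hy Oq hk2; rewrite /ball /=; lra.
have nB : nbhs x (Bmk (g q) k).
  rewrite nbhsE; exists (ball q (r k)); last by move=> y hy; exists q.
  split; first exact: ballO.
  by rewrite /ball /= dsym.
split; first by apply: subset_closure; exists x => //; exact: nbhs_singleton.
move=> hint; apply: nfU; rewrite nbhsE; exists (closure (f @` Bmk (g q) k))°.
  by split => //; exact: open_interior.
by move=> z /interior_subset; apply: closureS; exact: image_subset.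
Qed.
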